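(* Let $\mathcal{S}$ be a set and $T:\bigcup_{n\in\mathbb{N}}\mathcal{S}^n\to\mathbb{R}_{\ge0}$ satisfy $T(AB)\ge T(A)+T(B)$ for all $A,B$ (where $AB$ is concatenation) and $T(s)=0$ for every single element $s\in\mathcal{S}$. Let $\epsilon>0$, $t>0$ and $n\in\mathbb{N}$. Then for every $U\in\mathcal{S}^n$ with $T(U)\le t$, the number of blocks of the partition $P_{U;T,\epsilon}$ produced by the $(T,\epsilon)$ division scheme satisfies $$|P_{U;T,\epsilon}| \leq \log_2(4n)\Big(1+\frac{t}{\epsilon}\Big).$$
   Context: The $(T,\epsilon)$ division scheme applied to $U\in\mathcal{S}^n$: if $T(U)\le\epsilon$, stop and output $U$; otherwise split $U = U_1'U_2'$ into two contiguous parts with $|U_1'| = \lfloor |U|/2\rfloor$ and $|U_2'| = |U|-|U_1'|$. At each subsequent step, every current part $U_i'$ with $T(U_i')>\epsilon$ is split into two almost equal contiguous parts in the same way; repeat until every part has $T\le\epsilon$. The resulting partition of $[n]$ into contiguous blocks is $P_{U;T,\epsilon}$, and $|P_{U;T,\epsilon}|$ is its number of blocks. *)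

(* Defs.v *)
From mathcomp Require Import all_boot all_order all_algebra.
From mathcomp Require Import reals exp.
Set Implicit Arguments. Unset Strict Implicit. Unset Printing Implicit Defensive.
Import Order.TTheory GRing.Theory Num.Theory.
Local Open Scope ring_scope.

(* The (T,eps) division scheme: words of S^n are sequences [seq S]; a block
   is a contiguous subword. [division_fuel k T eps U] performs the recursive
   halving (first part of length floor(|U|/2)) with recursion depth at most k.
   With k = size U the fuel never runs out under the standing hypotheses
   (parts of size <= 1 have T = 0 <= eps). *)
Fixpoint division_fuel (S : Type) (R : realType) (k : nat)
    (T : seq S -> R) (eps : R) (U : seq S) : seq (seq S) :=
  match k with
  | 0 => [:: U]
  | k'.+1 =>
      if T U <= eps then [:: U]
      else division_fuel k' T eps (take (size U)./2 U)
           ++ division_fuel k' T eps (drop (size U)./2 U)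
  end.

Definition division (S : Type) (R : realType) (T : seq S -> R) (eps : R)
    (U : seq S) : seq (seq S) := division_fuel (size U) T eps U.

Definition log2 (R : realType) (x : R) : R := ln x / ln 2.

(* Main.v *)
Require Import Defs.
From mathcomp Require Import all_boot all_order all_algebra.
From mathcomp Require Import reals exp.
From mathcomp Require Import lra zify ring.
Import Order.TTheory GRing.Theory Num.Theory.
Local Open Scope ring_scope.

Lemma key (S : Type) (R : realType) (T : seq S -> R)
    (T_ge0 : forall A, 0 <= T A)
    (T_super : forall A B, T A + T B <= T (A ++ B))
    (T_single : forall s, T [:: s] = 0)
    (eps : R) (heps : 0 < eps) (m : nat) :
  forall k U, (size U <= 2 ^ m)%N ->
  (size (division_fuel k T eps U))%:R <= 1 + m%:R * (T U / eps).
Proof.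
have Tnil : T [::] = 0.
  apply/eqP; rewrite eq_le T_ge0 andbT.
  by have := T_super [::] [::]; rewrite cat0s; lra.
have Tsmall : forall U : seq S, (size U <= 1)%N -> T U = 0.
  by case=> [|a [|b l]] //= _; rewrite ?Tnil ?T_single.

elim: m => [|m IH] k U hs.
  have h0 : T U = 0 by apply: Tsmall; rewrite expn0 in hs.
  case: k => [|k] /=; first by rewrite h0 mul0r addr0.
  by rewrite h0 (ltW heps) /= mul0r addr0.
case: k => [|k] /=.
  rewrite lerDl; apply: mulr_ge0 => //; apply: divr_ge0 => //; exact: ltW.
case: ifP => hle; first by rewrite /= lerDl; apply: mulr_ge0 => //; apply: divr_ge0 => //; exact: ltW.
have hlt : eps < T U by rewrite ltNge hle.
rewrite size_cat natrD.
have hA : (size (take (size U)./2 U) <= 2 ^ m)%N.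
  rewrite size_take -divn2; rewrite expnS in hs; move: hs; move: (2 ^ m)%N (size U) => N z; case: ltnP => ?; lia.
have hB : (size (drop (size U)./2 U) <= 2 ^ m)%N.
  rewrite size_drop -divn2; rewrite expnS in hs; move: hs; move: (2 ^ m)%N (size U) => N z; lia.
have IHA := IH k _ hA.
have IHB := IH k _ hB.
have hsup := T_super (take (size U)./2 U) (drop (size U)./2 U).
rewrite cat_take_drop in hsup.
set a := T (take _ U) in IHA hsup.
set b := T (drop _ U) in IHB hsup.
have h1 : 1 < T U / eps by rewrite ltr_pdivlMr // mul1r.
have h2 : a / eps + b / eps <= T U / eps by rewrite -mulrDl ler_pM2r ?invr_gt0.
rewrite -natr1.
have hm : 0 <= (m%:R : R) by [].
have h3 := ler_wpM2l hm h2.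
rewrite mulrDl mulrDr in h3 *.
lra.
Qed.

Theorem lemma5p18 (S : Type) (R : realType) (T : seq S -> R)
    (T_ge0 : forall A, 0 <= T A)
    (T_super : forall A B, T A + T B <= T (A ++ B))
    (T_single : forall s, T [:: s] = 0)
    (eps t : R) (heps : 0 < eps) (ht : 0 < t) (n : nat) (hn : (0 < n)%N)
    (U : seq S) (hU : size U = n) (hTU : T U <= t) :
  (size (division T eps U))%:R <= log2 (4 * n%:R) * (1 + t / eps).
Proof.
set m := trunc_log 2 n.
have hs : (size U <= 2 ^ m.+1)%N by rewrite hU ltnW // trunc_log_ltn.
have K := @key S R T T_ge0 T_super T_single eps heps m.+1 (size U) U hs.
have hp : (2 ^ m <= n)%N by apply: trunc_logP.
have ln2 : 0 < ln (2 : R) by apply: ln_gt0; lra.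
have hn' : 0 < (n%:R : R) by rewrite ltr0n.
have hlm : (m%:R : R) * ln 2 <= ln (n%:R).
  rewrite [_ * ln _]mulrC mulr_natr -lnXn; last lra.
  have h2m : (0 : R) < 2 ^+ m by apply: exprn_gt0; lra.
  rewrite ler_ln ?posrE //.
  by rewrite -natrX ler_nat.
have hL : log2 (4 * (n%:R : R)) = 2 + ln (n%:R) / ln 2.
  have h4 : (0:R) < 4 by lra.
  rewrite /log2 lnM ?posrE //.
  have -> : (4 : R) = 2 ^+ 2 by rewrite expr2; lra.
  rewrite lnXn; last lra.
  by rewrite mulr2n; field; rewrite gt_eqF.
have hml : (m%:R : R) <= ln (n%:R) / ln 2 by rewrite ler_pdivlMr.
have hl0 : 0 <= ln (n%:R : R) / ln 2.
  apply: divr_ge0; last lra; apply: ln_ge0; rewrite ler1n //.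
have hx : T U / eps <= t / eps by rewrite ler_pM2r ?invr_gt0.
have hx0 : 0 <= T U / eps by apply: divr_ge0 => //; lra.
rewrite hL; apply: le_trans K _.
rewrite -natr1.
set L := ln _ / _ in hml hl0 *.
set x := T U / eps in hx hx0 *.
set y := t / eps in hx *.
nra.
Qed.
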